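(* Let $\{K(\cdot\mid\theta):\theta\in\Theta\}$ be a family of probability density functions on a space $X$, let $P_0$ be a probability distribution on $\Theta$, and let $(\theta_j)_{j\ge1}$ be independent and identically distributed with distribution $P_0$, independent of random weight sequences $\mathbf{w_1}=(w_{1j})_{j\ge1}$ and $\mathbf{w_2}=(w_{2j})_{j\ge1}$, where $w_{ij}\ge0$ and $\sum_{j}w_{ij}=1$ for $i=1,2$. Consider the random mixtures $f_i(x)=\sum_{j=1}^\infty w_{ij}\,K(x\mid\theta_j)$, $i=1,2$. Let $\alpha=\mathbb{E}\left\{\int_X K(x\mid\theta_j)^2\,dx\right\}$ and $\beta=\mathbb{E}\left\{\int_X K(x\mid\theta_j)K(x\mid\theta_k)\,dx\right\}$ for $j\neq k$ (these do not depend on $j,k$), and assume $\alpha<\infty$. Then $$\mathbb{E}\left[\,d_2(f_1,f_2)\mid \mathbf{w_1},\mathbf{w_2}\right]=(\alpha-\beta)\sum_{j=1}^\infty (w_{1j}-w_{2j})^2 .$$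
   Context: $d_2(f_1,f_2)=\int_X\left(f_1(x)-f_2(x)\right)^2dx$ (the squared $L_2$ distance, called the $L_2$ distance in the paper). *)

(* Defs.v *)
From HB Require Import structures.
From mathcomp Require Import all_boot all_order all_algebra.
From mathcomp Require Import all_classical all_reals all_analysis.
Set Implicit Arguments. Unset Strict Implicit. Unset Printing Implicit Defensive.
Import Order.TTheory GRing.Theory Num.Theory.
Local Open Scope classical_set_scope.
Local Open Scope ring_scope.

Definition iid_with_law {R : realType} {dO dT : measure_display}
  {Omega : measurableType dO} {Theta : measurableType dT}
  (P : probability Omega R) (P0 : probability Theta R)
  (theta : nat -> Omega -> Theta) : Prop :=
  (forall j, measurable_fun setT (theta j)) /\
  forall (J : seq nat) (A : nat -> set Theta),
    uniq J -> (forall j, measurable (A j)) ->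
    P (\bigcap_(j in [set` J]) (theta j @^-1` A j)) =
      (\prod_(j <- J) fine (P0 (A j)))%:E.

(* The random mixture f(x) = sum_j w_j K(x | theta_j) (as a real number;
   [fine] maps a divergent nonnegative series, i.e. +oo, to 0, which can only
   happen on a null set under the hypotheses of the lemma). *)
Definition mixture {R : realType} {dX dT : measure_display}
  {X : measurableType dX} {Theta : measurableType dT}
  (K : Theta -> X -> R) (w : nat -> R) (th : nat -> Theta) (x : X) : R :=
  fine (\sum_(j <oo) ((w j * K (th j) x)%:E))%E.

Definition d2 {R : realType} {dX : measure_display} {X : measurableType dX}
  (mu : {measure set X -> \bar R}) (f1 f2 : X -> R) : \bar R :=
  (\int[mu]_x ((f1 x - f2 x) ^+ 2)%:E)%E.

(* Main.v *)
Require Import Defs.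
From HB Require Import structures.
From mathcomp Require Import all_boot all_order all_algebra.
From mathcomp Require Import all_classical all_reals all_analysis.
From mathcomp Require Import ring lra measurable_realfun.
Import Order.TTheory GRing.Theory Num.Theory.
Local Open Scope classical_set_scope.
Local Open Scope ring_scope.
Local Open Scope ereal_scope.

Lemma term_le_nneseries (R : realType) (b : nat -> \bar R) k :
  (forall i, 0 <= b i) -> b k <= \sum_(i <oo) b i.
Proof.
move=> b0; rewrite (@nneseriesD1 _ _ k) //; apply: leeDl.
by apply: nneseries_ge0 => i _ _; exact: b0.
Qed.

Lemma nneseries_mull (R : realType) (x : \bar R) (b : nat -> \bar R) :
  0 <= x -> (forall k, 0 <= b k) ->
  x * \sum_(k <oo) b k = \sum_(k <oo) (x * b k).
Proof.
case: x => [r| |] //= x0 b0.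
- by rewrite nneseriesZl.
- have [allz|] := pselect (forall k, b k = 0).
    rewrite eseries0; last by move=> i _ _; rewrite allz.
    by rewrite mule0 eseries0 // => i _ _; rewrite allz mule0.
  move=> /existsNP[k bk].
  have bkp : 0 < b k by rewrite lt0e b0 andbT; apply/eqP.
  rewrite gt0_mulye; last first.
    by apply: (lt_le_trans bkp); apply: term_le_nneseries.
  apply/esym/(nneseries_pinfty (k:=k)) => //.
    by move=> n _; apply: mule_ge0.
  exact: gt0_mulye.
Qed.

Lemma nneseries_mul (R : realType) (a b : nat -> \bar R) :
  (forall k, 0 <= a k) -> (forall k, 0 <= b k) ->
  (\sum_(j <oo) a j) * (\sum_(k <oo) b k) = \sum_(j <oo) \sum_(k <oo) (a j * b k).
Proof.
move=> a0 b0; rewrite muleC nneseries_mull //; last first.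
  by apply: nneseries_ge0 => i _ _.
apply: eq_eseriesr => j _; rewrite muleC nneseries_mull //.
Qed.

Lemma nneseries_delta (R : realType) (f : nat -> \bar R) n :
  (forall k, k != n -> f k = 0) -> 0 <= f n -> \sum_(k <oo) f k = f n.
Proof.
move=> fz fn0; rewrite (@nneseriesD1 _ _ n) //; last first.
  by move=> k _; have [->//|/fz ->] := eqVneq k n.
by rewrite eseries0 ?adde0 // => i _ /= /fz.
Qed.

Lemma cross_sum (R : realType) (a b : R) (w v : nat -> R) :
  (0 <= b)%R -> (b <= a)%R -> (forall j, 0 <= w j)%R -> (forall j, 0 <= v j)%R ->
  \sum_(k <oo) (v k)%:E = 1 ->
  \sum_(j <oo) \sum_(k <oo) ((w j * v k)%:E * (if j == k then a%:E else b%:E))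
  = b%:E * \sum_(j <oo) (w j)%:E + (a - b)%:E * \sum_(j <oo) (w j * v j)%:E.
Proof.
move=> b0 ba w0 v0 v1.
have ab0 : (0 <= a - b)%R by rewrite subr_ge0.
transitivity (\sum_(j <oo) (b%:E * (w j)%:E + (a - b)%:E * (w j * v j)%:E)).
  apply: eq_eseriesr => j _.
  transitivity (\sum_(k <oo) ((w j * b)%:E * (v k)%:E +
     (if k == j then (w j * v j * (a - b))%:E else 0))).
    apply: eq_eseriesr => k _; rewrite eq_sym.
    have [->|_] := eqVneq j k; rewrite -!EFinM; congr (_%:E).
      by ring.
    by rewrite addr0 mulrAC.
  rewrite nneseriesD; last 2 first.
  - by move=> i _ _; rewrite -EFinM lee_fin !mulr_ge0.
  - by move=> i _ _; case: ifP => // _; rewrite lee_fin !mulr_ge0.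
  rewrite nneseriesZl; last by move=> i _; rewrite lee_fin.
  rewrite v1 mule1 (@nneseries_delta _ _ j).
  - by rewrite eqxx -!EFinM -!EFinD; congr EFin; ring.
  - by move=> k /negbTE ->.
  - by rewrite eqxx lee_fin !mulr_ge0.
rewrite nneseriesD; last 2 first.
- by move=> i _ _; rewrite -EFinM lee_fin !mulr_ge0.
- by move=> i _ _; rewrite -EFinM lee_fin !mulr_ge0.
rewrite !nneseriesZl //.
- by move=> i _; rewrite lee_fin mulr_ge0.
- by move=> i _; rewrite lee_fin.
Qed.

Lemma weight_le1 (R : realType) (v : nat -> R) j :
  (forall j, 0 <= v j)%R -> \sum_(k <oo) (v k)%:E = 1 -> (v j <= 1)%R.
Proof.
move=> v0 v1; rewrite -lee_fin -v1.
by apply: (@term_le_nneseries _ (fun k => (v k)%:E) j) => i; rewrite lee_fin.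
Qed.

Lemma G_fin (R : realType) (w v : nat -> R) :
  (forall j, 0 <= w j)%R -> (forall j, 0 <= v j)%R ->
  \sum_(k <oo) (w k)%:E = 1 -> \sum_(k <oo) (v k)%:E = 1 ->
  \sum_(j <oo) (w j * v j)%:E \is a fin_num.
Proof.
move=> w0 v0 w1 v1; rewrite ge0_fin_numE; last first.
  by apply: nneseries_ge0 => i _ _; rewrite lee_fin mulr_ge0.
apply: (@le_lt_trans _ _ (\sum_(j <oo) (w j)%:E)); last by rewrite w1 ltry.
apply: lee_nneseries => [i _ _|i _]; first by rewrite lee_fin mulr_ge0.
rewrite lee_fin ler_piMr //; exact: weight_le1.
Qed.

Lemma sq_diff_sum (R : realType) (w v : nat -> R) :
  (forall j, 0 <= w j)%R -> (forall j, 0 <= v j)%R ->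
  \sum_(k <oo) (w k)%:E = 1 -> \sum_(k <oo) (v k)%:E = 1 ->
  \sum_(j <oo) ((w j - v j) ^+ 2)%:E =
  \sum_(j <oo) (w j * w j)%:E + \sum_(j <oo) (v j * v j)%:E
   - 2%:E * \sum_(j <oo) (w j * v j)%:E.
Proof.
move=> w0 v0 w1 v1.
have z : \sum_(j <oo) ((2 * (w j * v j))%:E) = 2%:E * \sum_(j <oo) (w j * v j)%:E.
  rewrite -nneseriesZl; last by move=> i _; rewrite lee_fin mulr_ge0.
  by apply: eq_eseriesr => j _; rewrite EFinM.
have e : \sum_(j <oo) ((w j - v j) ^+ 2)%:E + \sum_(j <oo) ((2 * (w j * v j))%:E)
   = \sum_(j <oo) (w j * w j)%:E + \sum_(j <oo) (v j * v j)%:E.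
  rewrite -!nneseriesD.
  - by apply: eq_eseriesr => j _; rewrite -!EFinD; congr EFin; ring.
  - by move=> i _ _; rewrite lee_fin !mulr_ge0.
  - by move=> i _ _; rewrite lee_fin !mulr_ge0.
  - by move=> i _ _; rewrite lee_fin sqr_ge0.
  - by move=> i _ _; rewrite lee_fin !mulr_ge0.
rewrite -z -e addeK //; rewrite z fin_numM //; exact: G_fin.
Qed.

Section main.
Context (R : realType) (dX dT dO : measure_display)
  (X : measurableType dX) (Theta : measurableType dT) (Omega : measurableType dO)
  (mu : {sigma_finite_measure set X -> \bar R})
  (K : Theta -> X -> R)
  (K_meas : measurable_fun setT (fun p : X * Theta => K p.2 p.1))
  (K_ge0 : forall t x, (0 <= K t x)%R)
  (P0 : probability Theta R) (P : probability Omega R)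
  (theta : nat -> Omega -> Theta)
  (theta_iid : iid_with_law P P0 theta).

Definition Kj j (z : Omega * X) : R := K (theta j z.1) z.2.

Lemma mtheta j : measurable_fun setT (theta j).
Proof. by case: theta_iid. Qed.

Lemma mKj j : measurable_fun setT (Kj j).
Proof.
apply: (measurableT_comp (f := fun p : X * Theta => K p.2 p.1)
  (g := fun z : Omega * X => (z.2, theta j z.1))) => //.
apply: measurable_fun_pair => //.
exact: measurableT_comp (mtheta j) measurable_fst.
Qed.

Definition HK (p : Theta * Theta) : \bar R := \int[mu]_x (K p.1 x * K p.2 x)%:E.

Lemma mHK : measurable_fun setT HK.
Proof.
apply: (measurable_fun_fubini_tonelli_F
  (fun q : (Theta * Theta) * X => (K q.1.1 q.2 * K q.1.2 q.2)%:E)).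
  apply/measurable_EFinP; apply: measurable_funM.
  - apply: (measurableT_comp (f := fun p : X * Theta => K p.2 p.1)
      (g := fun q : (Theta * Theta) * X => (q.2, q.1.1))) => //.
    apply: measurable_fun_pair => //.
    exact: measurableT_comp measurable_fst measurable_fst.
  - apply: (measurableT_comp (f := fun p : X * Theta => K p.2 p.1)
      (g := fun q : (Theta * Theta) * X => (q.2, q.1.2))) => //.
    apply: measurable_fun_pair => //.
    exact: measurableT_comp measurable_snd measurable_fst.
by move=> q; rewrite lee_fin mulr_ge0.
Qed.

Lemma H_ge0 p : 0 <= HK p.
Proof. by apply: integral_ge0 => x _; rewrite lee_fin mulr_ge0. Qed.

Lemma law1 j A : measurable A -> P (theta j @^-1` A) = P0 A.
Proof.
move=> mA; case: theta_iid => _ /(_ [:: j] (fun _ => A)).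
rewrite big_seq1 fineK ?fin_num_measure // => <- //.
congr (P _); apply/seteqP; split => [om Aom i /=|om /(_ j) /=].
  by rewrite mem_seq1 => /eqP ->.
by apply; rewrite mem_seq1.
Qed.

Lemma law2 j k A B : j != k -> measurable A -> measurable B ->
  P ((fun om => (theta j om, theta k om)) @^-1` (A `*` B)) = P0 A * P0 B.
Proof.
move=> jk mA mB; have kj : (k == j) = false by rewrite eq_sym (negbTE jk).
case: theta_iid => _.
move=> /(_ [:: j; k] (fun i => if i == j then A else B)).
rewrite /= inE jk => /(_ isT).
rewrite big_cons big_seq1 eqxx kj EFinM.
rewrite !fineK ?fin_num_measure // => <-; last by move=> i; case: ifP.
congr (P _); apply/seteqP; split.
  move=> om /= [Aj Bk] i /=.
  by rewrite in_cons mem_seq1 => /orP[] /eqP ->; rewrite ?eqxx // kj.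
move=> om /= Hom; split.
  by have := Hom j; rewrite eqxx; apply; rewrite /= in_cons eqxx.
have := Hom k; rewrite kj; apply.
by rewrite /= in_cons mem_seq1 eqxx orbT.
Qed.

Lemma intH_diag j :
  \int[P]_om HK (theta j om, theta j om) = \int[P0]_t HK (t, t).
Proof.
have mg : measurable_fun setT (fun t => HK (t, t)).
  apply: (measurableT_comp (f := HK) (g := fun t : Theta => (t, t))); first exact: mHK.
  exact: measurable_fun_pair.
have := @ge0_integral_pushforward _ _ _ _ R _ (mtheta j) P setT (fun t => HK (t, t)) measurableT mg.
rewrite preimage_setT => <-; last by move=> t _; exact: H_ge0.
apply: eq_measure_integral; first exact: mtheta.
by move=> h A mA _; rewrite /= /pushforward; exact: law1.
Qed.

Lemma mpair j k : measurable_fun setT (fun om => (theta j om, theta k om)).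
Proof. exact: measurable_fun_pair (mtheta j) (mtheta k). Qed.

Lemma intH_off j k : j != k ->
  \int[P]_om HK (theta j om, theta k om) = \int[(P0 \x P0)%E]_p HK p.
Proof.
move=> jk.
have := @ge0_integral_pushforward _ _ _ _ R _ (mpair j k) P setT HK measurableT mHK.
rewrite preimage_setT => <-; last by move=> t _; exact: H_ge0.
apply: eq_measure_integral; first exact: mpair.
move=> h A mA _.
match goal with |- ?M A = _ =>
  rewrite -(@product_measure_unique _ _ _ _ _ P0 P0 M) // end.
by move=> A1 B1 mA1 mB1; rewrite /= /pushforward; exact: law2.
Qed.

Lemma mKK j k : measurable_fun setT (fun z => (Kj j z * Kj k z)%:E).
Proof. by apply/measurable_EFinP; apply: measurable_funM; exact: mKj. Qed.

Definition alpha0 := \int[P0]_t HK (t, t).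
Definition beta0 := \int[(P0 \x P0)%E]_p HK p.

Lemma I1 j k : \int[(P \x mu)%E]_z (Kj j z * Kj k z)%:E =
  if j == k then alpha0 else beta0.
Proof.
transitivity (\int[P]_om HK (theta j om, theta k om)).
  apply: (@fubini_tonelli1 _ _ _ _ _ P mu (fun z => (Kj j z * Kj k z)%:E)).
  - exact: mKK.
  - by move=> z /=; rewrite lee_fin mulr_ge0 //; exact: K_ge0.
case: eqVneq => [<-|jk]; first exact: intH_diag.
exact: intH_off.
Qed.

Lemma Kj_ge0 j z : (0 <= Kj j z)%R.
Proof. exact: K_ge0. Qed.

Definition F (w : nat -> R) z := \sum_(j <oo) (w j * Kj j z)%:E.

Lemma mF w : (forall j, 0 <= w j)%R -> measurable_fun setT (F w).
Proof.
move=> w0.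
apply: (@ge0_emeasurable_sum _ _ _ _ (fun j z => (w j * Kj j z)%:E) xpredT).
- by move=> k x _ _; rewrite lee_fin mulr_ge0 // Kj_ge0.
- move=> k _; apply/measurable_EFinP; apply: measurable_funM => //; exact: mKj.
Qed.

Lemma F_ge0 w z : (forall j, 0 <= w j)%R -> 0 <= F w z.
Proof. by move=> w0; apply: nneseries_ge0 => i _ _; rewrite lee_fin mulr_ge0 // Kj_ge0. Qed.

Lemma I2 (a b : R) (w v : nat -> R) :
  alpha0 = a%:E -> beta0 = b%:E -> (0 <= b)%R -> (b <= a)%R ->
  (forall j, 0 <= w j)%R -> (forall j, 0 <= v j)%R ->
  \sum_(k <oo) (v k)%:E = 1 ->
  \int[(P \x mu)%E]_z (F w z * F v z) =
  b%:E * \sum_(j <oo) (w j)%:E + (a - b)%:E * \sum_(j <oo) (w j * v j)%:E.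
Proof.
move=> ha hb b0 ba w0 v0 v1.
have t0 j k z : 0 <= (w j * Kj j z)%:E * (v k * Kj k z)%:E.
  by apply: mule_ge0; rewrite lee_fin mulr_ge0 // Kj_ge0.
rewrite -(@cross_sum _ a b w v b0 ba w0 v0 v1).
transitivity (\int[(P \x mu)%E]_z \sum_(j <oo) \sum_(k <oo)
    ((w j * Kj j z)%:E * (v k * Kj k z)%:E)).
  by apply: eq_integral => z _; rewrite /F nneseries_mul // => k; rewrite lee_fin mulr_ge0 // Kj_ge0.
rewrite integral_nneseries //; last 2 first.
- move=> j; apply: (@ge0_emeasurable_sum _ _ _ _
     (fun k z => (w j * Kj j z)%:E * (v k * Kj k z)%:E) xpredT) => // k _.
  by apply: emeasurable_funM; apply/measurable_EFinP;
    apply: measurable_funM => //; exact: mKj.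
- by move=> j z _; apply: nneseries_ge0 => k _ _.
apply: eq_eseriesr => j _.
rewrite integral_nneseries //; last first.
  move=> k; apply: emeasurable_funM; apply/measurable_EFinP;
    apply: measurable_funM => //; exact: mKj.
apply: eq_eseriesr => k _.
transitivity (\int[(P \x mu)%E]_z ((w j * v k)%:E * (Kj j z * Kj k z)%:E)).
  by apply: eq_integral => z _; rewrite -!EFinM; congr EFin; ring.
rewrite ge0_integralZl //; last 3 first.
- exact: mKK.
- by move=> z _; rewrite lee_fin mulr_ge0 // Kj_ge0.
- by rewrite lee_fin mulr_ge0.
by rewrite I1 ha hb.
Qed.

Lemma alpha0_ge0 : 0 <= alpha0.
Proof. by apply: integral_ge0 => t _; exact: H_ge0. Qed.

Lemma beta0_ge0 : 0 <= beta0.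
Proof. by apply: integral_ge0 => t _; exact: H_ge0. Qed.

Lemma beta0_le : alpha0 \is a fin_num -> beta0 <= alpha0.
Proof.
move=> afin.
have e1 := I1 0 1; have e0 := I1 0 0; have e11 := I1 1 1.
rewrite /= in e1 e0 e11.
rewrite -(@lee_pmul2l _ 2%:E) //.
have -> : 2%:E * alpha0 = alpha0 + alpha0.
  by rewrite -(fineK afin) -EFinM -EFinD; congr EFin; ring.
rewrite -{1}e1 -{1}e0 -e11.
rewrite -ge0_integralZl //; last 2 first.
- exact: (mKK 0 1).
- by move=> z _; rewrite lee_fin mulr_ge0 // Kj_ge0.
rewrite -ge0_integralD //; last 4 first.
- by move=> z _; rewrite lee_fin mulr_ge0 // Kj_ge0.
- exact: mKK.
- by move=> z _; rewrite lee_fin mulr_ge0 // Kj_ge0.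
- exact: mKK.
apply: ge0_le_integral => //.
- by move=> z _; rewrite mule_ge0 // lee_fin mulr_ge0 // Kj_ge0.
- by apply: measurable_funeM; exact: mKK.
- by apply: emeasurable_funD; exact: mKK.
move=> z _; rewrite -EFinM -EFinD lee_fin.
rewrite -subr_ge0 (_ : _ - _ = (Kj 0 z - Kj 1 z) ^+ 2)%R ?sqr_ge0 //; ring.
Qed.

Lemma intFF (a b : R) (w v : nat -> R) :
  alpha0 = a%:E -> beta0 = b%:E -> (0 <= b)%R -> (b <= a)%R ->
  (forall j, 0 <= w j)%R -> (forall j, 0 <= v j)%R ->
  \sum_(k <oo) (w k)%:E = 1 -> \sum_(k <oo) (v k)%:E = 1 ->
  (P \x mu)%E.-integrable setT (fun z => F w z * F v z).
Proof.
move=> ha hb b0 ba w0 v0 w1 v1.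
apply/integrableP; split; first by apply: emeasurable_funM; exact: mF.
rewrite (eq_integral (fun z => F w z * F v z)); last first.
  by move=> z _; rewrite gee0_abs // mule_ge0 // F_ge0.
rewrite (@I2 a b w v ha hb b0 ba w0 v0 v1) w1 mule1 ltey_eq; apply/orP; left.
rewrite fin_numD fin_numM //; exact: G_fin.
Qed.

Lemma F_fin (a b : R) (w : nat -> R) :
  alpha0 = a%:E -> beta0 = b%:E -> (0 <= b)%R -> (b <= a)%R ->
  (forall j, 0 <= w j)%R -> \sum_(k <oo) (w k)%:E = 1 ->
  {ae (P \x mu)%E, forall z, F w z \is a fin_num}.
Proof.
move=> ha hb b0 ba w0 w1.
have := integrable_ae measurableT (@intFF a b w w ha hb b0 ba w0 w0 w1 w1).
apply: filterS => z /(_ I).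
have := @F_ge0 w z w0; case: (F w z) => //=; by rewrite mulyy.
Qed.

Lemma mFF (w v : nat -> R) : (forall j, 0 <= w j)%R -> (forall j, 0 <= v j)%R ->
  measurable_fun setT (fun z => F w z * F v z).
Proof. by move=> w0 v0; apply: emeasurable_funM; exact: mF. Qed.

Lemma main_aux (a b : R) (w1 w2 : nat -> R) :
  alpha0 = a%:E -> beta0 = b%:E -> (0 <= b)%R -> (b <= a)%R ->
  (forall j, 0 <= w1 j)%R -> (forall j, 0 <= w2 j)%R ->
  \sum_(k <oo) (w1 k)%:E = 1 -> \sum_(k <oo) (w2 k)%:E = 1 ->
  \int[P]_om d2 mu (mixture K w1 (fun j => theta j om))
                    (mixture K w2 (fun j => theta j om))
  = (a - b)%:E * \sum_(j <oo) ((w1 j - w2 j) ^+ 2)%:E.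
Proof.
move=> ha hb b0 ba w10 w20 w1s w2s.
pose h := fun z : Omega * X => ((fine (F w1 z) - fine (F w2 z)) ^+ 2)%:E.
have mh : measurable_fun setT h.
  apply/measurable_EFinP; apply: measurable_funX; apply: measurable_funB;
    (apply: measurableT_comp => //; exact: mF).
have h0 z : 0 <= h z by rewrite lee_fin sqr_ge0.
transitivity (\int[(P \x mu)%E]_z h z).
  by apply/esym; apply: (@fubini_tonelli1 _ _ _ _ _ P mu h mh h0).
pose Q := fun z => (F w1 z * F w1 z + F w2 z * F w2 z) - 2%:E * (F w1 z * F w2 z).
have mQ : measurable_fun setT Q.
  apply: emeasurable_funB; first by apply: emeasurable_funD; exact: mFF.
  by apply: measurable_funeM; exact: mFF.
rewrite (@ae_eq_integral _ _ _ (P \x mu)%E setT Q h measurableT mh mQ); last first.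
  move: (@F_fin a b w1 ha hb b0 ba w10 w1s) (@F_fin a b w2 ha hb b0 ba w20 w2s).
  apply: filterS2 => z f1 f2 _.
  rewrite /h /Q -(fineK f1) -(fineK f2) /=.
  move: (fine (F w1 z)) (fine (F w2 z)) => r1 r2.
  by rewrite -!EFinM -EFinD; congr EFin; ring.
have i11 := @intFF a b w1 w1 ha hb b0 ba w10 w10 w1s w1s.
have i22 := @intFF a b w2 w2 ha hb b0 ba w20 w20 w2s w2s.
have i12 := @intFF a b w1 w2 ha hb b0 ba w10 w20 w1s w2s.
rewrite /Q (@integralB _ _ _ (P \x mu)%E setT measurableT
  (fun z => F w1 z * F w1 z + F w2 z * F w2 z)
  (fun z => 2%:E * (F w1 z * F w2 z))); last 2 first.
- exact: integrableD.
- exact: integrableZl.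
rewrite integralD // integralZl //.
rewrite (@I2 a b w1 w1 ha hb b0 ba w10 w10 w1s).
rewrite (@I2 a b w2 w2 ha hb b0 ba w20 w20 w2s).
rewrite (@I2 a b w1 w2 ha hb b0 ba w10 w20 w2s).
rewrite w1s w2s (@sq_diff_sum _ w1 w2 w10 w20 w1s w2s).
rewrite -(fineK (@G_fin _ w1 w1 w10 w10 w1s w1s)) -(fineK (@G_fin _ w2 w2 w20 w20 w2s w2s)).
rewrite -(fineK (@G_fin _ w1 w2 w10 w20 w1s w2s)).
move: (fine _) (fine _) (fine _) => g11 g22 g12.
rewrite !mule1 -!EFinM -!EFinD.
by congr EFin; ring.
Qed.

Lemma alpha_eq :
  \int[P]_om \int[mu]_x ((K (theta 0%N om) x) ^+ 2)%:E = alpha0.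
Proof.
rewrite /alpha0 -(intH_diag 0); apply: eq_integral => om _.
by apply: eq_integral => x _; rewrite expr2.
Qed.

Lemma beta_eq :
  \int[P]_om \int[mu]_x ((K (theta 0%N om) x * K (theta 1%N om) x)%:E) = beta0.
Proof. by rewrite /beta0 -(@intH_off 0%N 1%N). Qed.
End main.

Local Close Scope ereal_scope.

Theorem lemma2 (R : realType) (dX dT dO : measure_display)
  (X : measurableType dX) (Theta : measurableType dT) (Omega : measurableType dO)
  (mu : {sigma_finite_measure set X -> \bar R})
  (K : Theta -> X -> R)
  (K_meas : measurable_fun setT (fun p : X * Theta => K p.2 p.1))
  (K_ge0 : forall t x, 0 <= K t x)
  (K_dens : forall t, (\int[mu]_x (K t x)%:E = 1)%E)
  (P0 : probability Theta R) (P : probability Omega R)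
  (theta : nat -> Omega -> Theta)
  (theta_iid : iid_with_law P P0 theta)
  (w1 w2 : nat -> R)
  (w1_ge0 : forall j, 0 <= w1 j) (w2_ge0 : forall j, 0 <= w2 j)
  (w1_sum : (\sum_(j <oo) (w1 j)%:E = 1)%E)
  (w2_sum : (\sum_(j <oo) (w2 j)%:E = 1)%E)
  (alpha beta : \bar R)
  (alpha_def : alpha = (\int[P]_om \int[mu]_x ((K (theta 0%N om) x) ^+ 2)%:E)%E)
  (beta_def : beta =
     (\int[P]_om \int[mu]_x ((K (theta 0%N om) x * K (theta 1%N om) x)%:E))%E)
  (alpha_fin : (alpha < +oo)%E) :
  (\int[P]_om d2 mu (mixture K w1 (fun j => theta j om))
                    (mixture K w2 (fun j => theta j om)))%E
  = ((alpha - beta) * \sum_(j <oo) (((w1 j - w2 j) ^+ 2)%:E))%E.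
Proof.
have AE := alpha_eq R dX dT dO X Theta Omega mu K K_meas K_ge0 P0 P theta theta_iid.
have BE := beta_eq R dX dT dO X Theta Omega mu K K_meas K_ge0 P0 P theta theta_iid.
have BL := beta0_le R dX dT dO X Theta Omega mu K K_meas K_ge0 P0 P theta theta_iid.
have A0 := alpha0_ge0 R dX dT X Theta mu K K_ge0 P0.
have B0 := beta0_ge0 R dX dT X Theta mu K K_ge0 P0.
have MA := main_aux R dX dT dO X Theta Omega mu K K_meas K_ge0 P0 P theta theta_iid.
move: AE BE BL A0 B0 MA.
set A := alpha0 _ _ _ _ _ _ _ _; set B := beta0 _ _ _ _ _ _ _ _.
move=> AE BE BL A0 B0 MA.
rewrite AE in alpha_def; rewrite BE in beta_def; subst alpha beta.
have afin : A \is a fin_num by rewrite ge0_fin_numE.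
have bfin : B \is a fin_num.
  by rewrite ge0_fin_numE // (le_lt_trans (BL afin)).
rewrite -(fineK afin) -(fineK bfin) in MA *.
rewrite (MA (fine A) (fine B)) //.
- by rewrite -lee_fin fineK.
- by rewrite -lee_fin !fineK // BL.
Qed.
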